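(* For every $n\in\mathbb{N}$, \begin{align*} \sum_{j=0}^{n}\sum_{i=0}^{j}\frac{\binom{n+1}{i}}{\binom{n}{j}}(-1)^j&=\frac{n+1}{2n+4}\left(1+(-1)^n\big(2^{n+2}-1\big)\right),\\ \sum_{j=0}^{n}\sum_{i=0}^{j}\frac{\binom{2n+1}{i}}{\binom{2n}{j}}(-1)^j&=\frac{(-1)^n\,2^{2n-1}}{\binom{2n}{n}}+\frac{2n+1}{n+1}\cdot\frac{(-1)^n+1}{4}. \end{align*} *)

(* Defs.v *)
From HB Require Import structures.
From mathcomp Require Import all_boot all_order all_algebra.
Set Implicit Arguments. Unset Strict Implicit. Unset Printing Implicit Defensive.

(* Main.v *)
Require Import Defs.
From HB Require Import structures.
From mathcomp Require Import all_boot all_order all_algebra.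
From mathcomp Require Import zify ring lra.
Import Order.TTheory GRing.Theory Num.Theory.

Lemma sumC m : \sum_(0 <= i < m.+1) 'C(m, i) = 2 ^ m.
Proof.
rewrite big_mkord -[2]/(1+1) expnDn; apply: eq_bigr => i _; by rewrite !exp1n !muln1.

Qed.

Lemma sumChalf n : \sum_(0 <= i < n.+1) 'C((2 * n).+1, i) = 2 ^ (2 * n).
Proof.
have H : 2 * \sum_(0 <= i < n.+1) 'C((2 * n).+1, i) = 2 ^ (2 * n).+1.
  rewrite -sumC.
  have -> : (2 * n).+2 = n.+1 + n.+1 by lia.
  rewrite !big_mkord big_split_ord /= mul2n -addnn; congr (_ + _).
  rewrite (reindex_inj rev_ord_inj) /=; apply: eq_bigr => i _.
  rewrite -bin_sub; last by have := ltn_ord i; lia.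
  congr 'C(_, _); have := ltn_ord i; lia.
by move: H; rewrite expnS => /eqP; rewrite eqn_pmul2l // => /eqP.
Qed.

Local Open Scope ring_scope.

Lemma binrec (N k : nat) : (k < N)%N ->
  (('C(N, k.+1))%:R : rat)^-1 = N.+1%:R / N.+2%:R *
     ((('C(N.+1, k.+1))%:R)^-1 + (('C(N.+1, k.+2))%:R)^-1).
Proof.
move=> kN.
have h1 := mul_bin_diag N.+1 k.+1.
have h2 := mul_bin_down N.+1 k.+1.
have p1 : (0 < 'C(N, k.+1))%N by rewrite bin_gt0.
have p2 : (0 < 'C(N.+1, k.+1))%N by rewrite bin_gt0; lia.
have p3 : (0 < 'C(N.+1, k.+2))%N by rewrite bin_gt0; lia.
have e1 : (N.+1%:R * ('C(N, k.+1))%:R : rat) = k.+2%:R * ('C(N.+1, k.+2))%:R.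
  by rewrite -!natrM h1.
have e2 : (N.+1%:R * ('C(N, k.+1))%:R : rat) = (N - k)%:R * ('C(N.+1, k.+1))%:R.
  by rewrite -!natrM h2.
have e3 : ((N - k)%:R : rat) = N%:R - k%:R by rewrite natrB // ltnW.
rewrite e3 in e2.
move: p1 p2 p3; rewrite -!(ltr0n rat) => p1 p2 p3.
set a := ('C(N, k.+1))%:R in e1 e2 p1 *.
set b := ('C(N.+1, k.+1))%:R in e1 e2 p2 *.
set c := ('C(N.+1, k.+2))%:R in e1 e2 p3 *.
have na : a != 0 by rewrite gt_eqF.
have nb : b != 0 by rewrite gt_eqF.
have nc : c != 0 by rewrite gt_eqF.
have nN : (N.+2%:R : rat) != 0 by rewrite pnatr_eq0.
have -> : b = N.+1%:R * a / (N%:R - k%:R).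
  rewrite e2 [_ * b]mulrC mulfK // subr_eq0 eqr_nat; lia.
have -> : c = N.+1%:R * a / k.+2%:R.
  by rewrite e1 [_ * c]mulrC mulfK // pnatr_eq0.
rewrite -!natr1. field.
apply/and5P; split; rewrite ?natr1 ?pnatr_eq0 ?subr_eq0 ?eqr_nat -?lt0n ?bin_gt0 //; lia.
Qed.

Lemma key (N k : nat) : (k <= N)%N ->
  \sum_(0 <= j < k.+1) \sum_(0 <= i < j.+1)
      ('C(N.+1, i))%:R / ('C(N, j))%:R * (-1) ^+ j
  = N.+1%:R / N.+2%:R * ((-1) ^+ k * (\sum_(0 <= i < k.+1) ('C(N.+1, i))%:R)
        / ('C(N.+1, k.+1))%:R + (1 + (-1) ^+ k) / 2) :> rat.
Proof.
elim: k => [|k IH] kN.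
  rewrite !big_nat1 bin0 bin1 expr0 !mul1r divr1.
  have nN : (N.+2%:R : rat) != 0 by rewrite pnatr_eq0.
  have nN1 : (N.+1%:R : rat) != 0 by rewrite pnatr_eq0.
  rewrite bin0 invr1 -!natr1; field; by rewrite !natr1 !pnatr_eq0.
rewrite big_nat_recr //= IH ?(ltnW kN) //.
rewrite -!big_distrl /= [\sum_(0 <= i < k.+2) _]big_nat_recr //=.
have := binrec _ _ kN.
set F := \sum_(0 <= i < k.+1) _.
have nb : (('C(N.+1, k.+1))%:R : rat) != 0 by rewrite pnatr_eq0 -lt0n bin_gt0; lia.
have nc : (('C(N.+1, k.+2))%:R : rat) != 0 by rewrite pnatr_eq0 -lt0n bin_gt0; lia.
set b := (('C(N.+1, k.+1))%:R : rat) in nb *.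
set c := (('C(N.+1, k.+2))%:R : rat) in nc *.
move=> ->.
have nN : (N.+2%:R : rat) != 0 by rewrite pnatr_eq0.
rewrite exprS; field.
by rewrite nc nb /= andbT -natrD pnatr_eq0.
Qed.

Theorem mainTheorem13 (n : nat) :
  (\sum_(0 <= j < n.+1) \sum_(0 <= i < j.+1)
      ('C(n.+1, i))%:R / ('C(n, j))%:R * (-1) ^+ j : rat)
    = (n.+1)%:R / (2 * n + 4)%:R * (1 + (-1) ^+ n * (2 ^+ n.+2 - 1))
  /\
  (\sum_(0 <= j < n.+1) \sum_(0 <= i < j.+1)
      ('C((2 * n).+1, i))%:R / ('C(2 * n, j))%:R * (-1) ^+ j : rat)
    = (-1) ^+ n * (2 ^+ (2 * n) / 2) / ('C(2 * n, n))%:R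
      + ((2 * n).+1)%:R / (n.+1)%:R * (((-1) ^+ n + 1) / 4).
Proof.
split.
  rewrite key // binn.
  have hs : \sum_(0 <= i < n.+1) ('C(n.+1, i))%:R = (2 ^+ n.+1 - 1 : rat).
    have := sumC n.+1; rewrite big_nat_recr //= binn => /(congr1 (fun x => x%:R : rat)).
    rewrite natrD natr_sum natrX => <-; by rewrite addrK.
  rewrite hs.
  have -> : ((2 * n + 4)%:R : rat) = 2 * n.+2%:R.
    by rewrite -[2 in RHS]/(2%:R) -natrM; congr (_%:R); lia.
  have nN : (n.+2%:R : rat) != 0 by rewrite pnatr_eq0.
  rewrite !exprS; field.
  by rewrite -natrD pnatr_eq0.
rewrite key; last by lia.
have hs : \sum_(0 <= i < n.+1) ('C((2 * n).+1, i))%:R = (2 ^+ (2 * n) : rat).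
  by rewrite -natr_sum sumChalf natrX.
rewrite hs.
have h := mul_bin_diag (2 * n).+1 n.
have e : (((2 * n).+1)%:R * ('C(2 * n, n))%:R : rat) = n.+1%:R * ('C((2 * n).+1, n.+1))%:R.
  by rewrite -!natrM h.
have na : (('C(2 * n, n))%:R : rat) != 0 by rewrite pnatr_eq0 -lt0n bin_gt0; lia.
have nn : (n.+1%:R : rat) != 0 by rewrite pnatr_eq0.
have -> : ('C((2 * n).+1, n.+1))%:R = ((2 * n).+1)%:R * ('C(2 * n, n))%:R / n.+1%:R :> rat.
  by rewrite e [_ * ('C(_,_))%:R]mulrC mulfK.
set a := (('C(2 * n, n))%:R : rat) in na *.
have -> : (((2 * n).+2)%:R : rat) = 2 * n.+1%:R.
  by rewrite -[2 in RHS]/(2%:R) -natrM; congr (_%:R); lia.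
have n2 : (((2 * n).+1)%:R : rat) != 0 by rewrite pnatr_eq0.
field.
rewrite na /=. have q : (0 : rat) <= n%:R by apply: ler0n. apply/andP; split; rewrite gt_eqF //; lra.
Qed.
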